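(* Let $r,h,g$ be positive integers with $g+h<gr$, and put $n=rg$. Then there exists an MR $(n,r,h,1)$-LRC over a field of size \[\ell\le\left(\max\left\{\tilde O\!\left(\tfrac nr\right),\ 2^r\right\}\right)^{\min\{h,\frac nr\}}.\]
   Context: $\tilde O(f)$ denotes $f\cdot(\log f)^{O(1)}$. Definition: let $\ell$ be a prime power, $a,g,r,h$ positive integers with $ga+h<gr$, $n=gr$, $k=n-ga-h$. An MR (maximally recoverable) $(n,r,h,a)_\ell$-LRC is an $[n,k]$ linear code over $\mathbb{F}_\ell$ with a parity-check matrix $H$ of the block form whose first $ga$ rows are block diagonal with diagonal blocks $A_1,\dots,A_g$ (each $a\times r$, coordinates split into $g$ consecutive groups of size $r$) and whose last $h$ rows are $(D_1|\cdots|D_g)$ with each $D_i$ of size $h\times r$, such that (i) each $A_i$ generates an $[r,a,r-a+1]_\ell$ MDS code, and (ii) every set of $ag+h$ columns of $H$ consisting of any $a$ columns from each group together with any $h$ further columns is linearly independent over $\mathbb{F}_\ell$. ''Over a field of size $\ell$'' means an MR $(n,r,h,a)_\ell$-LRC. *)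

(* Defs.v *)
From HB Require Import structures.
From mathcomp Require Import all_boot all_order all_algebra all_field.
From mathcomp Require Import zify.
Set Implicit Arguments. Unset Strict Implicit. Unset Printing Implicit Defensive.
Import GRing.Theory.
Local Open Scope ring_scope.

(* Coordinates 0..g*r-1 are split into g consecutive groups of size r;
   column j lies in group j %/ r.  Rows 0..g*a-1 form the block-diagonal
   part (row i belongs to block i %/ a); rows g*a..g*a+h-1 are the D-part. *)

Lemma mr_row_lt (g a h : nat) (k : 'I_g) (x : 'I_a) : (k * a + x < g * a + h)%N.
Proof.
have := ltn_ord k; have := ltn_ord x; move=> Hx Hk.
have : (k.+1 * a <= g * a)%N by rewrite leq_mul2r Hk orbT.
nia.
Qed.

Lemma mr_col_lt (g r : nat) (k : 'I_g) (y : 'I_r) : (k * r + y < g * r)%N.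
Proof.
have := ltn_ord k; have := ltn_ord y; move=> Hy Hk.
have : (k.+1 * r <= g * r)%N by rewrite leq_mul2r Hk orbT.
nia.
Qed.

Definition blockA (F : fieldType) (g r h a : nat)
  (H : 'M[F]_(g * a + h, g * r)) (k : 'I_g) : 'M[F]_(a, r) :=
  \matrix_(x < a, y < r) H (Ordinal (mr_row_lt h k x)) (Ordinal (mr_col_lt k y)).

Definition wt (F : fieldType) (m : nat) (u : 'rV[F]_m) : nat :=
  #|[set j : 'I_m | u 0 j != 0]|.

Definition gen_MDS (F : fieldType) (a r : nat) (A : 'M[F]_(a, r)) : Prop :=
  \rank A = a /\
  (forall v : 'rV[F]_a, v != 0 -> (r - a + 1 <= wt (v *m A))%N).

Definition group_of (g r : nat) (k : 'I_g) : {set 'I_(g * r)} :=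
  [set j : 'I_(g * r) | (j %/ r == k)%N].

Definition cols_indep (F : fieldType) (m n : nat) (M : 'M[F]_(m, n))
  (S : {set 'I_n}) : Prop :=
  row_free (colsub (fun i : 'I_#|S| => enum_val i) M)^T.

Definition MR_parity_check (F : fieldType) (g r h a : nat)
  (H : 'M[F]_(g * a + h, g * r)) : Prop :=
  [/\
      (forall (i : 'I_(g * a + h)) (j : 'I_(g * r)),
          (i < g * a)%N -> (i %/ a != j %/ r)%N -> H i j = 0),
      (* [n, k] code with k = n - g a - h *)
      \rank H = (g * a + h)%N,
      (forall k : 'I_g, gen_MDS (blockA H k)) &
      (forall T U : {set 'I_(g * r)},
          (forall k : 'I_g, #|T :&: group_of r k| = a) ->
          #|U| = h -> [disjoint T & U] ->
          cols_indep H (T :|: U))].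

Definition MR_LRC (F : fieldType) (g r h a : nat) : Prop :=
  exists H : 'M[F]_(g * a + h, g * r), MR_parity_check H.

(* Main.v *)
Require Import Defs.
From HB Require Import structures.
From mathcomp Require Import all_boot all_order all_algebra all_field.

Set Implicit Arguments. Unset Strict Implicit. Unset Printing Implicit Defensive.
Import GRing.Theory.
Local Open Scope ring_scope.

Section Char2.
Variable F : fieldType.
Hypothesis h2 : 2%:R = 0 :> F.

Lemma c2_add (x : F) : x + x = 0.
Proof. by rewrite -mulr2n -mulr_natr h2 mulr0. Qed.

Lemma c2_opp (x : F) : - x = x.
Proof. by apply/eqP; rewrite eq_sym -addr_eq0 c2_add. Qed.

Lemma frob i (x y : F) : (x + y) ^+ (2 ^ i) = x ^+ (2 ^ i) + y ^+ (2 ^ i).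
Proof.
elim: i x y => [|i IH] x y; first by rewrite !expr1.
rewrite expnS !exprM sqrrD -mulr_natr h2 mulr0 addr0; exact: IH.
Qed.

Lemma frob0 i : (0 : F) ^+ (2 ^ i) = 0.
Proof. by rewrite expr0n expn_eq0. Qed.

Lemma subset_sum_inj (I : finType) (U : {set I}) (b : I -> F) :
  (forall V : {set I}, V \subset U -> V != set0 -> \sum_(j in V) b j != 0) ->
  {in powerset U &, injective (fun V : {set I} => \sum_(j in V) b j)}.
Proof.
move=> Hb V1 V2; rewrite !inE => s1 s2 e.
pose D := (V1 :\: V2) :|: (V2 :\: V1).
have sD : \sum_(j in D) b j = 0.
  rewrite big_mkcond /= (eq_bigr (fun j => (if j \in V1 then b j else 0) +
      (if j \in V2 then b j else 0))); last first.
    move=> j _; rewrite !inE.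
    by case: (j \in V1); case: (j \in V2); rewrite /= ?c2_add ?addr0 ?add0r.
  by rewrite big_split /= -!big_mkcond /= e c2_add.
have DU : D \subset U.
  apply/subsetP=> j; rewrite !inE => /orP[/andP[_ jV]|/andP[_ jV]].
    exact: (subsetP s1).
  exact: (subsetP s2).
have /eqP D0 : D == set0.
  by apply/negPn/negP => nD; move: (Hb _ DU nD); rewrite sD eqxx.
apply/setP=> j; move/setP: D0 => /(_ j); rewrite !inE.
by case: (j \in V1); case: (j \in V2).
Qed.

Lemma moore (I : finType) (U : {set I}) (b c : I -> F) :
  (forall V : {set I}, V \subset U -> V != set0 -> \sum_(j in V) b j != 0) ->
  (forall i, (i < #|U|)%N -> \sum_(j in U) c j * b j ^+ (2 ^ i) = 0) ->
  forall j, j \in U -> c j = 0.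
Proof.
move=> Hb Hc j0 j0U; apply/eqP; apply/negP => /negP cj0.
set n := #|U|.
pose M : 'M[F]_(n, n) := \matrix_(i, l) b (enum_val l) ^+ (2 ^ i).
pose cv : 'rV[F]_n := \row_l c (enum_val l).
have cvM : cv *m M^T = 0.
  apply/rowP=> i; rewrite !mxE.
  rewrite -[RHS](Hc i (ltn_ord i)) (big_enum_val (fun j => c j * b j ^+ (2 ^ i))) /=.
  apply: eq_bigr => l _; by rewrite !mxE.
have cv0 : cv != 0.
  apply/eqP => /rowP /(_ (enum_rank_in j0U j0)); rewrite !mxE enum_rankK_in //.
  by move/eqP; rewrite (negbTE cj0).
have nfree : ~~ row_free M.
  apply: contra cv0 => fM.
  have fMt : row_free M^T by rewrite /row_free mxrank_tr.
  by rewrite -(mulmx_free_eq0 _ fMt) cvM.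
have [a a0 aM] : exists2 a : 'rV[F]_n, a != 0 & a *m M = 0.
  have : kermx M != 0 by rewrite kermx_eq0.
  case: (boolP [exists i, row i (kermx M) != 0]) => [/existsP[i Hi] _|].
    exists (row i (kermx M)) => //; apply/sub_kermxP; exact: row_sub.
  rewrite negb_exists => /forallP Hall /eqP[]; apply/row_matrixP => i.
  by move: (Hall i); rewrite negbK row0 => /eqP.
pose L : {poly F} := \sum_(i < n) a 0 i *: 'X^(2 ^ i).
have hL x : L.[x] = \sum_(i < n) a 0 i * x ^+ (2 ^ i).
  by rewrite horner_sum; apply: eq_bigr => i _; rewrite hornerZ hornerXn.
have Ladd : {morph (fun x => L.[x]) : x y / x + y}.
  move=> x y /=; rewrite !hL -big_split /=; apply: eq_bigr => i _.
  by rewrite frob mulrDr.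
have L0 : L.[0] = 0 by rewrite hL big1 // => i _; rewrite frob0 mulr0.
have Lb (l : 'I_n) : L.[b (enum_val l)] = 0.
  move/rowP: aM => /(_ l); rewrite !mxE => <-; rewrite hL.
  by apply: eq_bigr => i _; rewrite !mxE.
have Lnz : L != 0.
  have [i0 ai0] : exists i0, a 0 i0 != 0.
    apply/existsP; apply: contraR a0; rewrite negb_exists => /forallP H.
    by apply/eqP/rowP => i; rewrite mxE; apply/eqP; move: (H i); rewrite negbK.
  apply: contraNneq ai0 => /(congr1 (fun p : {poly F} => p`_(2 ^ i0))).
  rewrite coef0 coef_sum (bigD1 i0) //= big1 ?addr0.
    by rewrite coefZ coefXn eqxx mulr1 => ->.
  move=> i ii0; rewrite coefZ coefXn eqn_exp2l // (inj_eq val_inj).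
  by rewrite eq_sym (negbTE ii0) mulr0.
pose rs := [seq \sum_(j in V) b j | V : {set I} <- enum (powerset U)].
have := @max_poly_roots _ L rs Lnz.
have -> : all (root L) rs.
  apply/allP => x /mapP[V]; rewrite mem_enum inE => VU ->.
  rewrite /root (big_morph _ Ladd L0) big1 // => j jV.
  have jU := subsetP VU j jV.
  by rewrite -(enum_rankK_in jU jU) Lb.
have -> : uniq rs.
  rewrite map_inj_in_uniq ?enum_uniq // => V1 V2; rewrite !mem_enum.
  exact: subset_sum_inj.
move=> /(_ isT isT); rewrite size_map -cardE card_powerset.
apply/negP; rewrite -leqNgt.
apply: (leq_trans (size_sum _ _ _)); apply/bigmax_leqP => i _.
apply: (leq_trans (size_scale_leq _ _)); rewrite size_polyXn.
by rewrite ltn_exp2l.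
Qed.
End Char2.

Lemma vander_sparse (K : fieldType) (g m : nat) (x u : 'I_g -> K) :
  injective x -> (#|[set k | u k != 0%R]| <= m)%N ->
  (forall t, (t < m)%N -> \sum_k u k * x k ^+ t = 0) -> forall k, u k = 0.
Proof.
move=> xinj Sm Hs k0; apply/eqP/negP => /negP uk0.
set S := [set k | u k != 0] in Sm.
pose P : {poly K} := \prod_(k <- enum (S :\ k0)) ('X - (x k)%:P).
have sP : (size P <= m)%N.
  rewrite size_prod_XsubC -cardE; apply: leq_trans Sm.
  by rewrite (cardsD1 k0 S) inE uk0.
have hP y : P.[y] = \prod_(k <- enum (S :\ k0)) (y - x k).
  by rewrite horner_prod; apply: eq_bigr => k _; rewrite hornerXsubC.
have E1 : \sum_k u k * P.[x k] = 0.
  rewrite (eq_bigr (fun k => \sum_(t < size P) P`_t * (u k * x k ^+ t))); last first.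
    move=> k _; rewrite horner_coef mulr_sumr; apply: eq_bigr => t _.
    by rewrite mulrCA.
  rewrite exchange_big big1 // => t _; rewrite -mulr_sumr Hs ?mulr0 //.
  exact: leq_trans (ltn_ord t) sP.
have E2 : \sum_k u k * P.[x k] = u k0 * P.[x k0].
  rewrite (bigD1 k0) //= big1 ?addr0 // => k kk0.
  case: (boolP (u k == 0)) => [/eqP -> | ukn]; first by rewrite mul0r.
  rewrite hP (bigD1_seq k) /= ?subrr ?mul0r ?mulr0 //.
    by rewrite mem_enum !inE kk0.
  exact: enum_uniq.
move: E2; rewrite E1 => /esym /eqP; rewrite mulf_eq0 (negbTE uk0) /= hP.
rewrite prodf_seq_eq0 => /hasP [k]; rewrite mem_enum !inE.
case/andP => kk0 _ /=; rewrite subr_eq0 => /eqP /xinj e.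
by rewrite e eqxx in kk0.
Qed.

Lemma nonfree_ker (F : fieldType) m n (A : 'M[F]_(m, n)) :
  ~~ row_free A -> exists2 v : 'rV_m, v != 0 & v *m A = 0.
Proof.
move=> nf; have : kermx A != 0 by rewrite kermx_eq0.
case: (boolP [exists i, row i (kermx A) != 0]) => [/existsP[i Hi] _|].
  exists (row i (kermx A)) => //; apply/sub_kermxP; exact: row_sub.
rewrite negb_exists => /forallP Hall /eqP[]; apply/row_matrixP => i.
by move: (Hall i); rewrite negbK row0 => /eqP.
Qed.

Lemma cols_indep_crit (F : fieldType) m n (M : 'M[F]_(m, n)) (S : {set 'I_n}) :
  (forall c : 'I_n -> F, (forall j, j \notin S -> c j = 0) ->
     (forall i, \sum_j c j * M i j = 0) -> forall j, c j = 0) ->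
  cols_indep M S.
Proof.
move=> Hc; rewrite /cols_indep; apply/negPn/negP => /nonfree_ker [v v0 vM].
pose c j := \sum_(l | enum_val l == j) v 0 l.
have cS j : j \notin S -> c j = 0.
  move=> jS; rewrite /c big_pred0 // => l; apply/negbTE; apply: contra jS.
  by move=> /eqP <-; exact: enum_valP.
have cM i : \sum_j c j * M i j = 0.
  move/rowP: vM => /(_ i); rewrite !mxE => e; rewrite -[RHS]e.
  rewrite (partition_big (fun l => enum_val l) xpredT) //=.
  apply: eq_bigr => j _; rewrite /c mulr_suml.
  apply: eq_big => [l //|l /eqP <-]; by rewrite !mxE.
have := Hc c cS cM; move=> H0; case/eqP: v0; apply/rowP => l; rewrite mxE.
have := H0 (enum_val l); rewrite /c (big_pred1 l) // => l'.
exact: (inj_eq enum_val_inj).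
Qed.

Lemma rank_colsub_le (F : fieldType) m n p (f : 'I_p -> 'I_n) (A : 'M[F]_(m, n)) :
  (\rank (colsub f A)^T <= \rank A)%N.
Proof.
have -> : colsub f A = (rowsub f A^T)^T by apply/matrixP => i j; rewrite !mxE.
by rewrite trmxK (leq_trans (mxrankS (rowsub_sub f A^T))) // mxrank_tr.
Qed.

Lemma kof_lt g r (j : 'I_(g * r)) : (j %/ r < g)%N.
Proof.
have := ltn_ord j; case: r j => [|r] j.
  by move: (g * 0)%N (muln0 g) j => n -> [].
by rewrite ltn_divLR.
Qed.
Definition kof g r (j : 'I_(g * r)) : 'I_g := Ordinal (kof_lt j).

Lemma mem_group g r (j : 'I_(g * r)) k : (j \in group_of r k) = (kof j == k).
Proof. by rewrite inE. Qed.

Section Main.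
Variables (F : fieldType) (g r h : nat).
Hypothesis h2 : 2%:R = 0 :> F.
Hypothesis r0 : (0 < r)%N.
Hypothesis ghr : (g + h < g * r)%N.
Variable al : 'I_(g * r) -> F.
Hypothesis Hal : forall (V : {set 'I_(g * r)}) (t : 'I_g -> 'I_(g * r)),
  (forall k, kof (t k) = k) -> (forall k, t k \notin V) -> V != set0 ->
  (#|(@kof g r) @: V| <= minn h g)%N -> \sum_(j in V) (al j - al (t (kof j))) != 0.

Definition Hm : 'M[F]_(g * 1 + h, g * r) :=
  \matrix_(i, j) if (i < g)%N then ((i : nat) == (j %/ r)%N)%:R
                 else al j ^+ (2 ^ (i - g))%N.

Lemma rowk_lt (k : 'I_g) : (k < g * 1 + h)%N.
Proof. by rewrite muln1 ltn_addr. Qed.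
Lemma rowg_lt (i : 'I_h) : (g + i < g * 1 + h)%N.
Proof. by rewrite muln1 ltn_add2l. Qed.

Lemma Hm_k k j : Hm (Ordinal (rowk_lt k)) j = (kof j == k)%:R.
Proof. by rewrite mxE /= ltn_ord eq_sym. Qed.

Lemma Hm_g i j : Hm (Ordinal (rowg_lt i)) j = al j ^+ (2 ^ i).
Proof. by rewrite mxE /= ltnNge leq_addr /= addKn. Qed.

Lemma Hm_MR (T U : {set 'I_(g * r)}) :
  (forall k : 'I_g, #|T :&: group_of r k| = 1%N) ->
  #|U| = h -> [disjoint T & U] -> cols_indep Hm (T :|: U).
Proof.
move=> HT HU dTU; apply: cols_indep_crit => c cS cM.
have hk k : \sum_(j | kof j == k) c j = 0.
  have := cM (Ordinal (rowk_lt k)) => e; rewrite big_mkcond /= -[RHS]e.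
  apply: eq_bigr => j _; rewrite Hm_k; case: eqP => _; by rewrite ?mulr1 ?mulr0.
have hg i : (i < h)%N -> \sum_j c j * al j ^+ (2 ^ i) = 0.
  move=> ih; have := cM (Ordinal (rowg_lt (Ordinal ih))) => e; rewrite -[RHS]e.
  by apply: eq_bigr => j _; rewrite Hm_g.
pose t0 (k : 'I_g) : 'I_(g * r) := Ordinal (mr_col_lt k (Ordinal r0)).
pose t k := odflt (t0 k) [pick x in T :&: group_of r k].
have tP k : t k \in T :&: group_of r k.
  rewrite /t; case: pickP => [x -> //| /= none].
  have := HT k; move/eqP/cards1P => [x ex].
  by have := none x; rewrite ex inE eqxx.
have tT k : t k \in T by have := tP k; rewrite inE => /andP[].
have tk k : kof (t k) = k by have := tP k; rewrite inE mem_group => /andP[_ /eqP].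
have tuniq j : j \in T -> t (kof j) = j.
  move=> jT; have := HT (kof j); move/eqP/cards1P => [x ex].
  have : t (kof j) \in [set x] by rewrite -ex tP.
  have : j \in [set x] by rewrite -ex in_setI jT mem_group eqxx.
  by rewrite !inE => /eqP -> /eqP ->.
have ident f : \sum_j c j * f j = \sum_(j in U) c j * (f j - f (t (kof j))).
  have e1 : \sum_j c j * f (t (kof j)) = 0.
    rewrite (partition_big (@kof g r) xpredT) //= big1 // => k _.
    rewrite (eq_bigr (fun j => c j * f (t k))) => [|j /eqP -> //].
    by rewrite -mulr_suml hk mul0r.
  have -> : \sum_j c j * f j = \sum_j c j * (f j - f (t (kof j))) +
              \sum_j c j * f (t (kof j)).
    by rewrite -big_split /=; apply: eq_bigr => j _; rewrite -mulrDr subrK.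
  rewrite e1 addr0 [RHS]big_mkcond; apply: eq_bigr => j _; case: ifP => // jU.
  case: (boolP (j \in T)) => jT; first by rewrite tuniq // subrr mulr0.
  by rewrite cS ?mul0r // inE negb_or jT jU.
have cU j : j \in U -> c j = 0.
  apply: (moore h2 (b := fun j => al j - al (t (kof j))) (c := c)).
    move=> V VU V0; apply: Hal => //.
      move=> k; apply/negP => /(subsetP VU) tU.
      by rewrite (disjointFr dTU (tT k)) in tU.
    rewrite leq_min; apply/andP; split.
      apply: leq_trans (leq_imset_card _ _) _; rewrite -HU.
      exact: subset_leq_card.
    by apply: leq_trans (max_card _) _; rewrite card_ord.
  move=> i; rewrite HU => ih.
  rewrite (eq_bigr (fun j => c j * (al j ^+ (2^i) - al (t (kof j)) ^+ (2^i)))).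
    by rewrite -ident hg.
  by move=> j1 _; rewrite !(c2_opp h2) frob.
move=> j; case: (boolP (j \in U)) => jU; first exact: cU.
case: (boolP (j \in T)) => jT; last by apply: cS; rewrite inE negb_or jT jU.
have := ident (fun x => (x == j)%:R).
rewrite [RHS]big1 => [|x xU]; last by rewrite cU // mul0r.
rewrite (bigD1 j) //= eqxx mulr1 big1 ?addr0 // => x /negbTE ->.
by rewrite mulr0.
Qed.


Lemma Hm_check : MR_parity_check Hm.
Proof.
have MDS k : gen_MDS (blockA Hm k).
  have A1 : blockA Hm k = const_mx 1.
    apply/matrixP => x y; rewrite !mxE /= (ord1 x) muln1 addn0 ltn_ord.
    by rewrite divnMDl // divn_small // addn0 eqxx.
  rewrite A1; split.
    rewrite rank_rV; apply/eqP; rewrite eqb1.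
    apply/eqP => /matrixP /(_ 0 (Ordinal r0)); rewrite !mxE => /eqP.
    by rewrite oner_eq0.
  move=> v v0; rewrite /wt subnK //.
  have v00 : v 0 0 != 0.
    apply: contra v0 => /eqP e; apply/eqP/rowP => i; by rewrite (ord1 i) e mxE.
  rewrite (_ : [set _ | _] = setT) ?cardsT ?card_ord //.
  apply/setP => j; rewrite !inE !mxE big_ord1 mxE mulr1 //.
split.
- move=> i j ig ne; rewrite divn1 in ne.
  have ig' : (i < g)%N by move: ig; rewrite [X in (_ < X)%N]muln1.
  rewrite mxE ig'.
  by rewrite (negbTE ne).
- pose t0 (k : 'I_g) : 'I_(g * r) := Ordinal (mr_col_lt k (Ordinal r0)).
  have t0inj : injective t0.
    move=> k1 k2 /(congr1 val) /= /eqP; rewrite !addn0 eqn_pmul2r // => /eqP.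
    exact: val_inj.
  have t0k k : kof (t0 k) = k.
    by apply: val_inj => /=; rewrite divnMDl // divn_small // addn0.
  pose T0 := [set t0 k | k in 'I_g].
  have cT0 : #|T0| = g by rewrite card_imset // card_ord.
  have HT k : #|T0 :&: group_of r k| = 1%N.
    rewrite (_ : _ :&: _ = [set t0 k]) ?cards1 //.
    apply/setP => x; rewrite in_setI mem_group in_set1; apply/andP/eqP => [[]|->].
      by case/imsetP => k' _ -> /eqP; rewrite t0k => ->.
    by rewrite t0k eqxx imset_f.
  have : (h <= #|~: T0|)%N.
    have := cardsC T0; rewrite card_ord cT0 => e.
    by rewrite -(leq_add2l g) e ltnW // (leq_trans _ ghr) // leq_addr.
  case/card_geqP => s [us ss sT].
  pose U0 := [set x in s].
  have cU0 : #|U0| = h by rewrite cardsE (card_uniqP us) ss.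
  have dTU : [disjoint T0 & U0].
    apply/pred0P => x /=; apply/negP => /andP[xT]; rewrite inE => /sT.
    by rewrite inE xT.
  have := Hm_MR HT cU0 dTU; rewrite /cols_indep /row_free.
  move=> /eqP e.
  have cS : #|T0 :|: U0| = (g * 1 + h)%N.
    by rewrite cardsU (disjoint_setI0 dTU) cards0 subn0 cT0 cU0 muln1.
  have := rank_colsub_le (fun i : 'I_#|T0 :|: U0| => enum_val i) Hm.
  rewrite e cS => le; by apply/eqP; rewrite eqn_leq rank_leq_row le.
- exact: MDS.
- exact: Hm_MR.
Qed.
End Main.

Lemma vec_iso (K : finFieldType) (s : nat) : 2 \in [pchar K] -> #|K| = (2 ^ s)%N ->
  exists (rho : 'rV['F_2]_s -> K) (sig : K -> 'rV['F_2]_s),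
    [/\ {morph rho : a b / a + b}, cancel rho sig & cancel sig rho].
Proof.
move=> pK cK.
have [f fL [g fg gf]] := pprimeChar_vectAxiom pK.
have dK : logn 2 #|pPrimeCharType pK| = s by rewrite cK pfactorK.
move: (logn 2 _) dK f fL g fg gf => n -> f fL g fg gf.
exists g, f; split => // a b.
apply: (can_inj fg).
have := fL 1 (g a) (g b); rewrite !scale1r => ->.
by rewrite !gf.
Qed.

Lemma morph0 (A B : zmodType) (f : A -> B) : {morph f : a b / a + b} -> f 0 = 0.
Proof. by move=> fD; apply: (addrI (f 0)); rewrite -fD !addr0. Qed.

Lemma embed (K F : finFieldType) (s m : nat) :
  2 \in [pchar K] -> 2 \in [pchar F] -> #|K| = (2 ^ s)%N -> #|F| = (2 ^ (m * s))%N ->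
  exists phi : 'rV[K]_m -> F, {morph phi : a b / a + b} /\ (forall z, phi z = 0 -> z = 0).
Proof.
move=> pK pF cK cF.
have [rK [sK [rKD rsK srK]]] := vec_iso pK cK.
have [rF [sF [rFD rsF srF]]] := vec_iso pF cF.
have sKD : {morph sK : a b / a + b}.
  by move=> a b; apply: (can_inj rsK); rewrite rKD !srK.
exists (fun z => rF (mxvec (\matrix_(t < m, a < s) sK (z 0 t) 0 a))); split.
  move=> a b /=; rewrite -rFD -raddfD /=; congr (rF (mxvec _)).
  by apply/matrixP => t c; rewrite !mxE sKD mxE.
move=> z /= z0; apply/rowP => t; rewrite mxE.
have rF0 := morph0 rFD; have sK0 := morph0 sKD.
have := z0; rewrite -rF0 => /(can_inj rsF) /eqP; rewrite -(raddf0 (@mxvec _ m s)).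
rewrite (inj_eq (can_inj mxvecK)) => /eqP /matrixP M0.
apply: (can_inj srK); rewrite sK0; apply/rowP => c.
by have := M0 t c; rewrite !mxE.
Qed.

Lemma morphB (A B : zmodType) (f : A -> B) : {morph f : a b / a + b} ->
  forall a b, f (a - b) = f a - f b.
Proof.
move=> fD a b; apply: (addIr (f b)); rewrite -fD !subrK //.
Qed.

Lemma morph_sum (A B : zmodType) (f : A -> B) : {morph f : a b / a + b} ->
  forall (I : finType) (P : pred I) (G : I -> A), f (\sum_(i | P i) G i) = \sum_(i | P i) f (G i).
Proof. by move=> fD I P G; rewrite (big_morph f fD (morph0 fD)). Qed.

Definition yof g r (j : 'I_(g * r)) : nat := (j %% r)%N.

Lemma ky_inj g r (j1 j2 : 'I_(g * r)) : kof j1 = kof j2 -> yof j1 = yof j2 -> j1 = j2.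
Proof.
move=> /(congr1 val) /= e1 e2; apply: val_inj => /=.
by rewrite (divn_eq j1 r) (divn_eq j2 r) e1; rewrite /yof in e2; rewrite e2.
Qed.

Lemma yof_lt g r (j : 'I_(g * r)) : (0 < r)%N -> (yof j < r)%N.
Proof. by move=> r0; rewrite /yof ltn_mod. Qed.

Lemma construct (F K : finFieldType) (g r h s : nat) :
  2 \in [pchar K] -> 2 \in [pchar F] -> #|K| = (2 ^ s)%N ->
  #|F| = (2 ^ (minn h g * s))%N -> (r <= s)%N -> (g <= 2 ^ s)%N -> (0 < r)%N ->
  exists al : 'I_(g * r) -> F,
  forall (V : {set 'I_(g * r)}) (t : 'I_g -> 'I_(g * r)),
  (forall k, kof (t k) = k) -> (forall k, t k \notin V) -> V != set0 ->
  (#|(@kof g r) @: V| <= minn h g)%N -> \sum_(j in V) (al j - al (t (kof j))) != 0.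
Proof.
move=> pK pF cK cF rs gs r0.
set m := minn h g in cF *.
have [phi [phiD phi0]] := embed pK pF cK cF.
have [rK [sK [rKD rsK srK]]] := vec_iso pK cK.
have gK : (g <= #|K|)%N by rewrite cK.
pose x (k : 'I_g) : K := enum_val (widen_ord gK k).
have xinj : injective x.
  by move=> k1 k2 /enum_val_inj /(congr1 val) /= e; apply: val_inj.
pose dl (y : nat) : 'rV['F_2]_s := \row_(c < s) ((c : nat) == y)%:R.
pose e (y : nat) : K := rK (dl y).
pose al (j : 'I_(g * r)) : F := phi (\row_(t < m) (e (yof j) * x (kof j) ^+ t)).
exists al => V t tk tV V0 cV; apply/negP => /eqP S0.
pose u (k : 'I_g) := \sum_(j in V | kof j == k) (e (yof j) - e (yof (t k))).
have Hu : forall t0, (t0 < m)%N -> \sum_k u k * x k ^+ t0 = 0.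
  move=> t0 t0m.
  have := S0; rewrite /al.
  under eq_bigr do rewrite -(morphB phiD).
  rewrite -(morph_sum phiD) => /phi0 /rowP /(_ (Ordinal t0m)).
  rewrite summxE !mxE => Z; rewrite -[RHS]Z.
  rewrite (partition_big (@kof g r) xpredT) //=.
  apply: eq_bigr => k _; rewrite /u mulr_suml.
  apply: eq_big => [j //|j /andP[_ /eqP jk]].
  by rewrite !mxE tk jk mulrBl.
have cu : (#|[set k | u k != 0%R]| <= m)%N.
  apply: leq_trans cV; apply: subset_leq_card; apply/subsetP => k.
  rewrite inE => uk; apply/imsetP.
  case: (pickP (fun j => (j \in V) && (kof j == k))) => [j /andP[jV /eqP <-]|none].
    by exists j.
  by move: uk; rewrite /u big_pred0 ?eqxx.
have u0 := vander_sparse xinj cu Hu.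
case/set0Pn: V0 => j0 j0V.
have := u0 (kof j0); rewrite /u.
under eq_bigr do rewrite -(morphB rKD).
rewrite -(morph_sum rKD) -(morph0 rKD) => /(can_inj rsK) /rowP.
have y0s : (yof j0 < s)%N by apply: leq_trans (yof_lt j0 r0) rs.
move=> /(_ (Ordinal y0s)); rewrite summxE !mxE.
rewrite (bigD1 j0) ?j0V ?eqxx //= big1 ?addr0.
  rewrite !mxE /= eqxx.
  have -> : (yof j0 == yof (t (kof j0))) = false.
    apply/negP => /eqP/esym ey; have := tV (kof j0); rewrite (ky_inj (tk _) ey) j0V //.
  by move/eqP; rewrite subr0 oner_eq0.
move=> j /andP[/andP[jV /eqP jk] jj0]; rewrite !mxE /=.
have -> : (yof j0 == yof j) = false.
  by apply/negP => /eqP/esym ey; rewrite (ky_inj jk ey) eqxx in jj0.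
have -> : (yof j0 == yof (t (kof j0))) = false.
  apply/negP => /eqP/esym ey; have := tV (kof j0); rewrite (ky_inj (tk _) ey) j0V //.
by rewrite subrr.
Qed.

Local Close Scope ring_scope.

(* Õ(n/r) = Õ(g) is rendered as C * g * (floor(log2 g) + 1)^K for absolute
   constants C, K (independent of r, h, g). *)
Theorem theorem3p10 :
  exists C K : nat,
  forall r h g : nat, (0 < r)%N -> (0 < h)%N -> (0 < g)%N -> (g + h < g * r)%N ->
  exists F : finFieldType,
    (#|F| <= (maxn (C * g * (trunc_log 2 g).+1 ^ K) (2 ^ r)) ^ (minn h g))%N /\
    MR_LRC F g r h 1.
Proof.
exists 2, 0 => r h g r0 h0 g0 ghr.
set u := up_log 2 g; set s := maxn r u; set m := minn h g.
have s0 : (0 < s)%N by rewrite leq_max r0.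
have m0 : (0 < m)%N by rewrite leq_min h0 g0.
have [K pK cK] := pPrimePowerField (isT : prime 2) s0.
have ms0 : (0 < m * s)%N by rewrite muln_gt0 m0 s0.
have [F pF cF] := pPrimePowerField (isT : prime 2) ms0.
have gs : (g <= 2 ^ s)%N.
  apply: leq_trans (up_logP g (isT : (1 < 2)%N)) _.
  by rewrite leq_pexp2l // leq_maxr.
have [al Hal] := construct pK pF cK cF (leq_maxl r u) gs r0.
exists F; split.
  rewrite cF mulnC expnM leq_exp2r // expn0 muln1.
  rewrite /s; case: (leqP r u) => ru.
    apply: leq_trans (leq_maxl _ _).
    case: (ltnP 1 g) => g1.
      have := up_log_bounds (isT : (1 < 2)%N) g1; rewrite -/u => /andP[lt _].
      have le : (2 ^ u <= 2 * 2 ^ u.-1)%N by case: (u) => [|v] //=; rewrite expnS.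
      by apply: leq_trans le _; rewrite leq_mul2l /= ltnW.
    have g1' : g = 1%N by apply/eqP; rewrite eqn_leq g1 g0.
    by rewrite /u g1' up_log1.
  by rewrite leq_maxr.
exists (Hm h al); exact: (Hm_check (pcharf0 pF) r0 ghr Hal).
Qed.
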